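(* Let $r>1$ and let $N\ge1$, $K\ge2$ be integers. Let $\gamma^*(r,K,N)$ be the supremum of $$\sum_{i=1}^{K-1}\frac{z^i}{\sum_{j=i}^Kp^j}$$ over all $p=(p^1,\dots,p^K)$ with $p^K=1/r$, $\sum_{i=1}^Kp^i=1$, $p^i>0$ for all $i$, where $z^i=(\sum_{j=1}^ip^j)^N-(\sum_{j=1}^{i-1}p^j)^N$. Then $$\eta(r,K,N)=\frac{\gamma^*(r,K,N)}{\frac{r^N-(r-1)^N}{r^{N-1}}+\gamma^*(r,K,N)}.$$
   Context: Single item auction with $N$ buyers whose values are i.i.d., each taking values $0<x^1<\dots<x^K$ with probabilities $p^i>0$, $\sum_ip^i=1$. With $z^i$ as in the claim (the probability that the maximum value equals $x^i$) and reserve index $t(x,p)=\max\{i: i\in\arg\max_{1\le k\le K}x^k\sum_{j=k}^Kp^j\}$, the efficiency loss ratio of the welfare-maximizing revenue-optimal auction (which sells to the highest bidder if that bid is at least the common reserve price $x^{t}$) is $$\mathrm{ELR}_N(x,p)=\frac{\sum_{i=1}^{t(x,p)-1}z^ix^i}{\sum_{i=1}^Kz^ix^i}.$$ The worst case ELR $\eta(r,K,N)$ is the supremum of $\mathrm{ELR}_N(x,p)$ over all $p$ with $p^i>0$, $\sum_ip^i=1$, and all $x$ with $0<x^1<\dots<x^K\le rx^1$. *)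

(* Defs.v *)
(* R : realType.  Indices are 0-based:
   the paper's x^1..x^K, p^1..p^K are x 0 .. x (K-1), p 0 .. p (K-1). *)
From mathcomp Require Import all_boot all_order all_algebra.
From mathcomp Require Import classical_sets reals.
Set Implicit Arguments. Unset Strict Implicit. Unset Printing Implicit Defensive.
Import Order.TTheory GRing.Theory Num.Theory.
Local Open Scope ring_scope.
Local Open Scope classical_set_scope.

Section Auction.
Variable R : realType.

(* z^{k+1} = (p^1+..+p^{k+1})^N - (p^1+..+p^k)^N : prob. that the max value is x^{k+1} *)
Definition zprob (N : nat) (p : nat -> R) (k : nat) : R :=
  (\sum_(j < k.+1) p j) ^+ N - (\sum_(j < k) p j) ^+ N.

Definition tailp (K : nat) (p : nat -> R) (k : nat) : R :=
  \sum_(k <= j < K) p j.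

(* 0-based reserve index: the largest k < K maximizing x k * tailp K p k
   (paper's t(x,p) minus one) *)
Definition reserve_idx (K : nat) (x p : nat -> R) : nat :=
  \max_(k < K | [forall j : 'I_K, x j * tailp K p j <= x k * tailp K p k]) (k : nat).

Definition ELR (K N : nat) (x p : nat -> R) : R :=
  (\sum_(i < reserve_idx K x p) zprob N p i * x i)
  / (\sum_(i < K) zprob N p i * x i).

Definition is_distr (K : nat) (p : nat -> R) : Prop :=
  (forall i, (i < K)%N -> 0 < p i) /\ \sum_(i < K) p i = 1.

Definition is_values (r : R) (K : nat) (x : nat -> R) : Prop :=
  0 < x 0%N /\ (forall i, (i.+1 < K)%N -> x i < x i.+1) /\ x K.-1 <= r * x 0%N.

Definition eta (r : R) (K N : nat) : R :=
  sup [set e | exists x p, is_distr K p /\ is_values r K x /\ e = ELR K N x p].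

Definition gamma_star (r : R) (K N : nat) : R :=
  sup [set g | exists p, is_distr K p /\ p K.-1 = r^-1 /\
        g = \sum_(i < K.-1) zprob N p i / tailp K p i].

End Auction.

(* Main.v *)
Require Import Defs.
From mathcomp Require Import all_boot all_order all_algebra.
From mathcomp Require Import classical_sets reals.
From mathcomp Require Import ring lra zify.
Import Order.TTheory GRing.Theory Num.Theory.
Set Implicit Arguments. Unset Strict Implicit. Unset Printing Implicit Defensive.
Local Open Scope ring_scope.

Section S.
Variable R : realType.
Implicit Types (p x : nat -> R).

Definition pre p k : R := \sum_(j < k) p j.

Lemma preS p k : pre p k.+1 = pre p k + p k.
Proof. by rewrite /pre big_ord_recr. Qed.

Lemma pre0 p : pre p 0 = 0.
Proof. by rewrite /pre big_ord0. Qed.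

Lemma pre_mono K p : (forall i, (i < K)%N -> 0 <= p i) ->
  forall i j, (i <= j <= K)%N -> pre p i <= pre p j.
Proof.
move=> hp i j /andP[hij hjK]; elim: j hij hjK => [|j IH] hij hjK.
  by move: hij; rewrite leqn0 => /eqP ->.
case: (ltngtP i j.+1) hij => // [hlt|->] _.
  rewrite preS; apply: le_trans (IH _ _) _ => //; first by apply: ltnW.
  by rewrite lerDl hp.
by [].
Qed.

Lemma pre_ge0 K p : (forall i, (i < K)%N -> 0 <= p i) ->
  forall i, (i <= K)%N -> 0 <= pre p i.
Proof. by move=> hp i hi; rewrite -(pre0 p); apply: (pre_mono hp); rewrite hi. Qed.

Lemma tailpE K p : \sum_(i < K) p i = 1 -> forall k, (k <= K)%N ->
  tailp K p k = 1 - pre p k.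
Proof.
move=> hs k hk; rewrite /tailp /pre -hs -!(big_mkord xpredT).
by rewrite (big_cat_nat (leq0n k) hk) /= [X in X - _]addrC addrK.
Qed.

Lemma sum_zprob N p m n : (m <= n)%N ->
  \sum_(m <= i < n) zprob N p i = pre p n ^+ N - pre p m ^+ N.
Proof. move=> h; exact: (telescope_sumr (fun k => pre p k ^+ N) h). Qed.

Lemma zprob_ge0 K N p : (forall i, (i < K)%N -> 0 <= p i) ->
  forall k, (k < K)%N -> 0 <= zprob N p k.
Proof.
move=> hp k hk; rewrite /zprob subr_ge0.
apply: lerXn2r; rewrite ?nnegrE.
- by apply: (pre_ge0 hp); rewrite ?hk // ltnW.
- by apply: (pre_ge0 hp); rewrite ?hk // ltnW.
- by rewrite -/(pre p k.+1) preS lerDl hp.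
Qed.


Lemma exists_argmax (f : nat -> R) n : exists k, (k <= n)%N /\ forall j, (j <= n)%N -> f j <= f k.
Proof.
elim: n => [|n [k [hk hm]]].
  by exists 0%N; split => // j; rewrite leqn0 => /eqP ->.
case: (lerP (f n.+1) (f k)) => h.
  exists k; split; first by rewrite (leq_trans hk).
  by move=> j; rewrite leq_eqVlt ltnS => /orP[/eqP ->|/hm].
exists n.+1; split => // j; rewrite leq_eqVlt ltnS => /orP[/eqP ->//|/hm hj].
by apply: le_trans hj (ltW h).
Qed.

Lemma reserve_spec K x p : (0 < K)%N ->
  let t := reserve_idx K x p in
  [/\ (t < K)%N,
   (forall j, (j < K)%N -> x j * tailp K p j <= x t * tailp K p t) &
   (forall k, (k < K)%N -> (forall j, (j < K)%N -> x j * tailp K p j <= x k * tailp K p k) -> (k <= t)%N)].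
Proof.
move=> K0 t.
set f := fun k => x k * tailp K p k.
pose P (m : nat) := [forall j : 'I_K, f j <= f m].
have hle : forall k, (k < K)%N -> (forall j, (j < K)%N -> f j <= f k) -> (k <= t)%N.
  move=> k hk hm; rewrite /t /reserve_idx.
  apply: (@leq_bigmax_cond _ _ _ (Ordinal hk)) => /=.
  apply/forallP => j; exact: hm.
have hQ : ((t == 0)%N || ((t < K)%N && P t)).
  rewrite /t /reserve_idx; apply: (big_ind (fun m => (m == 0)%N || ((m < K)%N && P m))) => //.
  - by move=> a b ha hb; case: (leqP a b).
  - by move=> i hi; apply/orP; right; rewrite ltn_ord; exact: hi.
have [k [hk hm]] := exists_argmax f K.-1.
have hkK : (k < K)%N by rewrite (leq_ltn_trans hk) // prednK.
have hm' : forall j, (j < K)%N -> f j <= f k.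
  by move=> j hj; apply: hm; rewrite -ltnS prednK.
have hkt := hle k hkK hm'.
have hPt : (t < K)%N /\ forall j, (j < K)%N -> f j <= f t.
  case/orP: hQ => [/eqP t0|/andP[htK /forallP hP]].
    move: hkt; rewrite t0 leqn0 => /eqP k0; rewrite -k0 in t0.
    by rewrite -k0; split.
  by split => // j hj; exact: (hP (Ordinal hj)).
by case: hPt => h1 h2; split.
Qed.


Lemma values_lt r K x : is_values r K x -> forall i j, (i < j < K)%N -> x i < x j.
Proof.
move=> [h0 [hs _]] i j /andP[hij hjK]; elim: j hij hjK => // j IH hij hjK.
rewrite ltnS leq_eqVlt in hij; case/orP: hij => [/eqP ->|hlt]; first by apply: hs.
apply: lt_trans (IH hlt (ltnW hjK)) _; exact: hs.
Qed.

Lemma values_le r K x : is_values r K x -> forall i j, (i <= j < K)%N -> x i <= x j.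
Proof.
move=> hv i j /andP[hij hjK]; rewrite leq_eqVlt in hij.
case/orP: hij => [/eqP -> //|hlt].
by apply/ltW/(values_lt hv); rewrite hlt.
Qed.

Lemma values_pos r K x : is_values r K x -> forall i, (i < K)%N -> 0 < x i.
Proof.
move=> hv i hi; case: i hi => [|i] hi; first by case: hv.
apply: lt_trans (values_lt hv (_ : (0 < i.+1 < K)%N)); [by case: hv | by rewrite hi].
Qed.

Definition sp (y : R) N := \sum_(i < N) y ^+ i.

Lemma spE (y : R) N : 1 - y ^+ N = (1 - y) * sp y N.
Proof.
rewrite -{1}(expr1n _ N) subrXX /sp; congr (_ * _); apply: eq_bigr => i _.
by rewrite expr1n mul1r.
Qed.

Lemma key (a F : R) N : 0 <= F -> F <= a -> a < 1 ->
  (1 - a ^+ N) * (1 - F) * F ^+ N <= (1 - F ^+ N) * (1 - a) * a ^+ N.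
Proof.
move=> F0 Fa a1.
have a0 : 0 <= a by apply: le_trans Fa.
have hs : sp a N * F ^+ N <= sp F N * a ^+ N.
  rewrite /sp !mulr_suml; apply: ler_sum => [[i hi]] _ /=.
  rewrite -(subnKC (ltnW hi)) !exprD.
  have h1 : F ^+ (N - i) <= a ^+ (N - i) by apply: lerXn2r; rewrite ?nnegrE.
  have h2 : 0 <= a ^+ i * F ^+ i by apply: mulr_ge0; apply: exprn_ge0.
  nra.
rewrite !spE.
have -> : (1 - a) * sp a N * (1 - F) * F ^+ N = ((1 - a) * (1 - F)) * (sp a N * F ^+ N) by ring.
have -> : (1 - F) * sp F N * (1 - a) * a ^+ N = ((1 - a) * (1 - F)) * (sp F N * a ^+ N) by ring.
apply: ler_wpM2l => //; apply: mulr_ge0; lra.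
Qed.


Lemma L1 (C F S W u v : R) : 0 < 1 - F -> 0 < u -> 0 <= S -> S * (1 - F) <= u ->
  W * (1 - F) = v - u -> 0 <= (1 - u) * (v - u) -> C * (1 - F) * u <= (1 - u) * v ->
  C * (1 - F) * S <= (S + W) * (1 - u).
Proof.
move=> hF hu hS hSu hW h1 h2.
set s := S * (1 - F).
have hs0 : 0 <= s by apply: mulr_ge0 => //; apply: ltW.
have g : C * (1 - F) * s <= (1 - u) * s + (1 - u) * (v - u).
  have : u * (C * (1 - F) * s) <= u * ((1 - u) * s + (1 - u) * (v - u)).
    have e : u * ((1 - u) * s + (1 - u) * (v - u)) - u * (C * (1 - F) * s)
      = (u - s) * ((1 - u) * (v - u)) + s * ((1 - u) * v - C * (1 - F) * u) by ring.
    rewrite -subr_ge0 e; apply: addr_ge0; apply: mulr_ge0 => //; rewrite ?subr_ge0 //.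
  by rewrite ler_pM2l.
rewrite -(ler_pM2r hF).
have e : (S + W) * (1 - u) * (1 - F) = (1 - u) * s + (1 - u) * (W * (1 - F)) by rewrite /s; ring.
rewrite e hW; apply: le_trans g; rewrite /s le_eqVlt; apply/orP; left; apply/eqP; ring.
Qed.

Lemma L2 (c1 c2 F P z lam : R) : 0 <= z -> 0 <= P -> 1 <= lam -> 0 < 1 - lam * P ->
  0 <= c1 -> c1 <= c2 -> c1 * (z / (1 - P)) <= c2 * (z / (1 - lam * P)).
Proof.
move=> z0 P0 l1 hl c10 c12.
have hP : 1 - lam * P <= 1 - P by nra.
have hP' : 0 < 1 - P by lra.
apply: ler_pM => //; first by apply: divr_ge0; lra.
apply: ler_wpM2l => //; rewrite lef_pV2 ?posrE //.
Qed.


Lemma tail_pos K p : is_distr K p -> forall i, (i < K)%N -> 0 < tailp K p i.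
Proof.
move=> [hp _] i hi; rewrite /tailp big_ltn //.
have : 0 <= \sum_(i.+1 <= j < K) p j.
  rewrite big_nat_cond; apply: sumr_ge0 => j /andP[/andP[_ hj] _]; exact: ltW (hp j hj).
have := hp i hi; lra.
Qed.

Definition Gs K N p := \sum_(i < K.-1) zprob N p i / tailp K p i.

Lemma Gs_ge0 K N p : is_distr K p -> 0 <= Gs K N p.
Proof.
move=> hd; have hp : forall i, (i < K)%N -> 0 <= p i by move=> i hi; apply: ltW; case: hd => h _; exact: h.
rewrite /Gs; apply: sumr_ge0 => [[i hi]] _ /=.
have hiK : (i < K)%N by rewrite (leq_trans hi) // leq_pred.
apply: divr_ge0; first exact: (zprob_ge0 _ hp).
exact: ltW (tail_pos hd hiK).
Qed.

Lemma q0_ex (r : R) K : 1 < r -> (2 <= K)%N -> exists q, is_distr K q /\ q K.-1 = r^-1.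
Proof.
move=> r1 K2.
have hK : K = (K.-2).+2 by lia.
set m := K.-2 in hK.
exists (fun i => if (i < K.-1)%N then (1 - r^-1) / (m.+1)%:R else r^-1).
have ri : 0 < r^-1 < 1 by rewrite invr_gt0 invf_lt1 ?r1 ?andbT; lra.
have ha : 0 < (1 - r^-1) / (m.+1)%:R by apply: divr_gt0 => //; lra.
split; last by rewrite ltnn.
split.
  by move=> i hi; case: ifP => _ //; lra.
rewrite hK big_ord_recr /= ltnn.
rewrite (eq_bigr (fun _ => (1 - r^-1) / (m.+1)%:R)); last by move=> [i hi] _ /=; rewrite hi.
rewrite sumr_const card_ord -(mulr_natr ((1 - r^-1) / (m.+1)%:R)) mulfVK; first lra.
by rewrite pnatr_eq0.
Qed.



Lemma zprobE N p i : zprob N p i = pre p i.+1 ^+ N - pre p i ^+ N.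
Proof. by []. Qed.

Lemma pre_split p m n : (m <= n)%N -> pre p n = pre p m + \sum_(m <= i < n) p i.
Proof. by move=> h; rewrite /pre -!(big_mkord xpredT) (big_cat_nat (leq0n m) h). Qed.

Lemma pre_eq p q n : (forall j, (j < n)%N -> q j = p j) -> pre q n = pre p n.
Proof. by move=> h; apply: eq_bigr => [[j hj]] _; apply: h. Qed.

Lemma Sle K N p t : is_distr K p -> (1 <= N)%N -> (t <= K)%N -> pre p t < 1 ->
  0 <= \sum_(i < t) zprob N p i / tailp K p i /\
  (\sum_(i < t) zprob N p i / tailp K p i) * (1 - pre p t) <= pre p t ^+ N.
Proof.
move=> hd N1 htK hF.
have [hp hs] := hd.
have hp0 : forall i, (i < K)%N -> 0 <= p i by move=> i hi; apply: ltW; apply: hp.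
have hF1 : 0 < 1 - pre p t by lra.
have hterm : forall i : 'I_t, 0 <= zprob N p i / tailp K p i /\
    zprob N p i / tailp K p i <= zprob N p i / (1 - pre p t).
  move=> [i hi] /=.
  have hiK : (i < K)%N := leq_trans hi htK.
  have hz := zprob_ge0 N hp0 hiK.
  have hT := tail_pos hd hiK.
  split; first by apply: divr_ge0 => //; apply: ltW.
  apply: ler_wpM2l => //; rewrite lef_pV2 ?posrE //.
  rewrite (tailpE hs (ltnW hiK)) lerD2l lerN2; apply: (pre_mono hp0).
  by rewrite (ltnW hi) htK.
split; first by apply: sumr_ge0 => i _; case: (hterm i).
rewrite -ler_pdivlMr //.
apply: le_trans (_ : \sum_(i < t) zprob N p i / (1 - pre p t) <= _).
  by apply: ler_sum => i _; case: (hterm i).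
rewrite -mulr_suml -(big_mkord xpredT (zprob N p)) sum_zprob // pre0 expr0n.
have -> : (N == 0%N) = false by apply/negbTE; rewrite -lt0n.
by rewrite subr0.
Qed.

Lemma core_lt (r : R) K N p t : 1 < r -> (1 <= N)%N -> is_distr K p -> (0 < t)%N -> (t < K.-1)%N ->
  0 < pre p t -> pre p t < 1 - r^-1 ->
  r * (1 - (1 - r^-1) ^+ N) * (1 - pre p t) * pre p t ^+ N <= (1 - pre p t ^+ N) * (1 - r^-1) ^+ N ->
  exists q, [/\ is_distr K q, q K.-1 = r^-1 &
    r * (1 - (1 - r^-1) ^+ N) * (1 - pre p t) * (\sum_(i < t) zprob N p i / tailp K p i)
      <= Gs K N q * (1 - pre p t ^+ N)].
Proof.
move=> r1 N1 hd t1 htK1 hF0 hFa hkey.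
set a := 1 - r^-1 in hFa hkey *.
set F := pre p t in hF0 hFa hkey *.
have [hp hs] := hd.
have hp0 : forall i, (i < K)%N -> 0 <= p i by move=> i hi; apply: ltW; apply: hp.
have r0 : 0 < r by lra.
have ri : 0 < r^-1 by rewrite invr_gt0.
have K1 : (K.-1 < K)%N by lia.
have htK : (t < K)%N by lia.
set m := (K.-1 - t)%N.
have m0 : 0 < m%:R :> R by rewrite ltr0n /m subn_gt0.
set c := (a - F) / m%:R.
have c0 : 0 < c by apply: divr_gt0 => //; lra.
pose q i := if (i < t)%N then p i else if (i < K.-1)%N then c else r^-1.
have qp : forall i, (i < t)%N -> q i = p i by move=> i hi; rewrite /q hi.
have preqt : pre q t = F by apply: pre_eq.
have preqK1 : pre q K.-1 = a.
  rewrite (pre_split q (ltnW htK1)) preqt.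
  rewrite (eq_big_nat _ _ (F2 := fun=> c)); last first.
    by move=> i /andP[h1 h2]; rewrite /q ltnNge h1 /= h2.
  rewrite sumr_const_nat -/m -(mulr_natr c) /c divfK ?gt_eqF //; lra.
have hdq : is_distr K q.
  split.
    by move=> i hi; rewrite /q; case: ifP => h1; [apply: hp | case: ifP].
  have -> : \sum_(i < K) q i = pre q K by [].
  rewrite -(prednK (ltn_trans t1 htK)) preS.
  by rewrite preqK1 /q ltnn ltnNge (ltnW htK1) /= /a subrK.
have hqK : q K.-1 = r^-1 by rewrite /q ltnNge (ltnW htK1) /= ltnn.
exists q; split => //.
have ha1 : a < 1 by rewrite /a; lra.
have hF1' : F < 1 by lra.
have [hS0 hSle] := Sle (N := N) hd N1 (ltnW htK) hF1'.
set S := \sum_(i < t) zprob N p i / tailp K p i in hS0 hSle *.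
set W := (a ^+ N - F ^+ N) / (1 - F).
have hF1 : 0 < 1 - F by lra.
have hGs : S + W <= Gs K N q.
  rewrite /Gs -(big_mkord xpredT (fun i => zprob N q i / tailp K q i)).
  rewrite (big_cat_nat (leq0n t) (ltnW htK1)) /=.
  apply: lerD.
    rewrite big_mkord le_eqVlt; apply/orP; left; apply/eqP; apply: eq_bigr => [[i hi]] _ /=.
    have hiK : (i <= K)%N by apply: ltnW; apply: ltn_trans htK.
    rewrite !zprobE (tailpE hs hiK) (tailpE hdq.2 hiK).
    rewrite (pre_eq (p := p) (q := q) (n := i.+1) (fun j hj => qp j (leq_trans hj hi))).
    by rewrite (pre_eq (p := p) (q := q) (n := i) (fun j hj => qp j (ltn_trans hj hi))).
  rewrite /W -preqK1 -preqt -(sum_zprob N q (ltnW htK1)) mulr_suml.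
  apply: ler_sum_nat => i /andP[hti hiK1].
  have hiK : (i < K)%N by apply: leq_trans hiK1 _; apply: ltnW.
  have hq0 : forall i, (i < K)%N -> 0 <= q i by move=> k hk; apply: ltW; apply: hdq.1.
  apply: ler_wpM2l; first exact: (zprob_ge0 N hq0).
  have hT := tail_pos hdq hiK.
  have hF1q : 0 < 1 - pre q t by rewrite preqt.
  rewrite lef_pV2 ?posrE // (tailpE hdq.2 (ltnW hiK)) lerD2l lerN2.
  by apply: (pre_mono hq0); rewrite hti (ltnW hiK).
have hu0 : 0 < F ^+ N by apply: exprn_gt0.
have hu1 : F ^+ N <= 1 by apply: exprn_ile1; lra.
have huv : F ^+ N <= a ^+ N by apply: lerXn2r; rewrite ?nnegrE; lra.
have hL := L1 (C := r * (1 - a ^+ N)) hF1 hu0 hS0 hSle (_ : W * (1 - F) = a ^+ N - F ^+ N) _ hkey.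
apply: le_trans (hL _ _) _.
- by rewrite /W divfK // gt_eqF.
- by apply: mulr_ge0; lra.
- by apply: ler_wpM2r => //; lra.
Qed.

Lemma core_eq (r : R) K N p t : 1 < r -> (1 <= N)%N -> is_distr K p -> (0 < t)%N -> t = K.-1 ->
  0 < pre p t -> pre p t <= 1 - r^-1 ->
  r * (1 - (1 - r^-1) ^+ N) * (1 - pre p t) * pre p t ^+ N <= (1 - pre p t ^+ N) * (1 - r^-1) ^+ N ->
  exists q, [/\ is_distr K q, q K.-1 = r^-1 &
    r * (1 - (1 - r^-1) ^+ N) * (1 - pre p t) * (\sum_(i < t) zprob N p i / tailp K p i)
      <= Gs K N q * (1 - pre p t ^+ N)].
Proof.
move=> r1 N1 hd t1 htK hF0 hFa hkey.
set a := 1 - r^-1 in hFa hkey *.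
set F := pre p t in hF0 hFa hkey *.
have [hp hs] := hd.
have hp0 : forall i, (i < K)%N -> 0 <= p i by move=> i hi; apply: ltW; apply: hp.
have r0 : 0 < r by lra.
have ri : 0 < r^-1 by rewrite invr_gt0.
have ha1 : a < 1 by rewrite /a; lra.
have hK : (0 < K)%N by lia.
have K1 : (K.-1 < K)%N by lia.
set lam := a / F.
have hl1 : 1 <= lam by rewrite /lam ler_pdivlMr // mul1r.
have hl0 : 0 < lam by lra.
have hlF : lam * F = a by rewrite /lam divfK // gt_eqF.
pose q i := if (i < K.-1)%N then lam * p i else r^-1.
have preq : forall i, (i <= K.-1)%N -> pre q i = lam * pre p i.
  move=> i hi; rewrite /pre mulr_sumr; apply: eq_bigr => [[j hj]] _ /=.
  by rewrite /q (leq_trans hj hi).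
have hdq : is_distr K q.
  split.
    move=> i hi; rewrite /q; case: ifP => h1 //.
    by apply: mulr_gt0 => //; apply: hp.
  have -> : \sum_(i < K) q i = pre q K by [].
  rewrite -(prednK hK) preS preq // -htK -/F hlF. rewrite /q htK ltnn /a; lra.
have hqK : q K.-1 = r^-1 by rewrite /q ltnn.
exists q; split => //.
have hF1 : 0 < 1 - F by lra.
have hc : r * (1 - a ^+ N) * (1 - F) <= (1 - F ^+ N) * lam ^+ N.
  have hu0 : 0 < F ^+ N by apply: exprn_gt0.
  rewrite /lam expr_div_n mulrA ler_pdivlMr //.
have hc0 : 0 <= r * (1 - a ^+ N) * (1 - F).
  apply: mulr_ge0; last lra; apply: mulr_ge0; first lra.
  rewrite subr_ge0; apply: exprn_ile1; lra.
rewrite /Gs -htK mulr_suml mulr_sumr; apply: ler_sum => [[i hi]] _ /=.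
have hiK1 : (i.+1 <= K.-1)%N by rewrite -htK.
have hiK' : (i < K)%N := leq_trans hiK1 (leq_pred K).
have hiK : (i <= K)%N := ltnW hiK'.
have hP0 : 0 <= pre p i by apply: (pre_ge0 hp0).
have hPF : pre p i <= F by apply: (pre_mono hp0); rewrite (ltnW hi) htK leq_pred.
rewrite !zprobE (tailpE hs hiK) (tailpE hdq.2 hiK) !preq ?(ltnW hiK1) //.
have hz : 0 <= pre p i.+1 ^+ N - pre p i ^+ N.
  exact: (zprob_ge0 N hp0 hiK').
have hlP : 0 < 1 - lam * pre p i.
  by have := ler_wpM2l (ltW hl0) hPF; rewrite hlF; lra.
have := L2 0 hz hP0 hl1 hlP hc0 hc.
have -> : (lam * pre p i.+1) ^+ N - (lam * pre p i) ^+ N = lam ^+ N * (pre p i.+1 ^+ N - pre p i ^+ N) by rewrite !exprMn; ring.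
by move=> h; apply: le_trans h _; rewrite le_eqVlt; apply/orP; left; apply/eqP; ring.
Qed.

Lemma upper (r : R) K N x p : 1 < r -> (1 <= N)%N -> (2 <= K)%N -> is_distr K p -> is_values r K x ->
  exists q, [/\ is_distr K q, q K.-1 = r^-1 &
    (r * (1 - (1 - r^-1) ^+ N)) * (\sum_(i < reserve_idx K x p) zprob N p i * x i)
      <= Gs K N q * (\sum_(reserve_idx K x p <= i < K) zprob N p i * x i)].
Proof.
move=> r1 N1 K2 hd hv.
have K0 : (0 < K)%N by apply: ltnW.
case: (reserve_spec x p K0) => htK hmax _.
set t := reserve_idx K x p in htK hmax *.
have [hp hs] := hd.
have hp0 : forall i, (i < K)%N -> 0 <= p i by move=> i hi; apply: ltW; apply: hp.
have r0 : 0 < r by lra.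
have ri : 0 < r^-1 < 1 by rewrite invr_gt0 invf_lt1 ?r1 ?andbT; lra.
have rri : r * r^-1 = 1 by rewrite mulfV // gt_eqF.
set a := 1 - r^-1.
have ha : 0 <= a <= 1 by rewrite /a; lra.
have hC : 0 <= r * (1 - a ^+ N).
  apply: mulr_ge0; first lra.
  rewrite subr_ge0; apply: exprn_ile1; lra.
have hT : forall i, (i <= K)%N -> tailp K p i = 1 - pre p i := tailpE hs.
have hpreK : pre p K = 1 := hs.
have hz : forall i, (i < K)%N -> 0 <= zprob N p i := zprob_ge0 N hp0.
have hB0 : 0 <= \sum_(t <= i < K) zprob N p i * x i.
  rewrite big_nat_cond; apply: sumr_ge0 => i /andP[/andP[_ hi] _].
  by apply: mulr_ge0; [apply: hz | apply: ltW; apply: (values_pos hv)].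
have [t0|tpos] := eqVneq t 0%N.
  rewrite t0 big_ord0 mulr0.
  have [q [hq1 hq2]] := q0_ex r1 K2.
  by exists q; split => //; apply: mulr_ge0 (Gs_ge0 _ hq1) _; rewrite -t0.
have t1 : (0 < t)%N by rewrite lt0n.
set F := pre p t.
set S := \sum_(i < t) zprob N p i / tailp K p i.
have hF0 : 0 < F.
  have h1 : (t.-1 < K)%N := leq_ltn_trans (leq_pred t) htK.
  rewrite /F -(prednK t1) preS; have := hp t.-1 h1.
  have := pre_ge0 hp0 (ltnW h1); lra.
have xt0 : 0 < x t := values_pos hv htK.
have hK1 : (K.-1 < K)%N by rewrite prednK.
have hxt : x t <= r * x 0%N.
  apply: le_trans (_ : x K.-1 <= _); last by case: hv => _ [].
  by apply: (values_le hv); rewrite hK1 andbT -ltnS prednK.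
have h0 : x 0%N <= x t * (1 - F).
  by have := hmax 0%N K0; rewrite (hT 0%N (leq0n K)) (hT t (ltnW htK)) pre0 subr0 mulr1.
have hFa : F <= a.
  have h1 : x t <= x t * (r * (1 - F)) by rewrite mulrCA; apply: le_trans hxt _; rewrite ler_pM2l.
  have h2 : 1 <= r * (1 - F) by rewrite -(ler_pM2l xt0) mulr1.
  have h3 : r^-1 * 1 <= r^-1 * (r * (1 - F)) by rewrite ler_pM2l //; case/andP: ri.
  by move: h3; rewrite mulr1 mulrA mulVf ?gt_eqF // mul1r /a; lra.
have hF1 : 0 < 1 - F by move: ri hFa => /andP[? ?]; rewrite /a; lra.
have hA : \sum_(i < t) zprob N p i * x i <= x t * (1 - F) * S.
  rewrite /S mulr_sumr; apply: ler_sum => [[i hi]] _ /=.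
  have hiK : (i < K)%N by apply: ltn_trans htK.
  have hTi := tail_pos hd hiK.
  have hmi := hmax i hiK; rewrite (hT t (ltnW htK)) in hmi.
  have hxi : x i <= x t * (1 - F) / tailp K p i by rewrite ler_pdivlMr.
  apply: le_trans (ler_wpM2l (hz i hiK) hxi) _.
  rewrite le_eqVlt; apply/orP; left; apply/eqP; rewrite /F; ring.
have hBl : x t * (1 - F ^+ N) <= \sum_(t <= i < K) zprob N p i * x i.
  apply: le_trans (_ : \sum_(t <= i < K) zprob N p i * x t <= _).
    by rewrite -mulr_suml (sum_zprob N p (ltnW htK)) hpreK expr1n mulrC.
  apply: ler_sum_nat => i /andP[hti hiK]; apply: ler_wpM2l; first exact: hz.
  by apply: (values_le hv); rewrite hti hiK.
have hkey : r * (1 - a ^+ N) * (1 - F) * F ^+ N <= (1 - F ^+ N) * a ^+ N.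
  have := key N (ltW hF0) hFa (_ : a < 1); rewrite /a => /(_ ltac:(lra)) hk.
  have := ler_wpM2l (ltW r0) hk.
  have -> : r * ((1 - (1 - r^-1) ^+ N) * (1 - F) * F ^+ N) = r * (1 - (1 - r^-1) ^+ N) * (1 - F) * F ^+ N by ring.
  have -> : r * ((1 - F ^+ N) * (1 - (1 - r^-1)) * (1 - r^-1) ^+ N) = (r * r^-1) * ((1 - F ^+ N) * (1 - r^-1) ^+ N) by ring.
  by rewrite rri mul1r.
have hcore : exists q, [/\ is_distr K q, q K.-1 = r^-1 & r * (1 - a ^+ N) * (1 - F) * S <= Gs K N q * (1 - F ^+ N)].
  have : (t < K.-1)%N \/ t = K.-1.
    case: (ltnP t K.-1) => h; [by left | right].
    by apply/eqP; rewrite eqn_leq h andbT -ltnS prednK.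
  case=> [hlt|heq].
    apply: (core_lt r1 N1 hd t1 hlt hF0) hkey.
    have : x t < x K.-1 by apply: (values_lt hv); rewrite hlt hK1.
    case: hv => _ [_ hr] hlt2.
    have h1 : x t < x t * (r * (1 - F)) by rewrite mulrCA; apply: lt_le_trans hlt2 _; apply: le_trans hr _; rewrite ler_pM2l.
    have h2 : 1 < r * (1 - F) by rewrite -(ltr_pM2l xt0) mulr1.
    have h3 : r^-1 * 1 < r^-1 * (r * (1 - F)) by rewrite ltr_pM2l //; case/andP: ri.
    move: h3; rewrite mulr1 mulrA mulVf ?gt_eqF // mul1r /a. move=> ?; rewrite -/F; lra.
  exact: (core_eq r1 N1 hd t1 heq hF0 hFa hkey).
case: hcore => q [hq1 hq2 hq3]; exists q; split => //.
have hG := Gs_ge0 N hq1.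
apply: le_trans (ler_wpM2l hC hA) _.
apply: le_trans (ler_wpM2l hG hBl).
have -> : r * (1 - a ^+ N) * (x t * (1 - F) * S) = x t * (r * (1 - a ^+ N) * (1 - F) * S) by ring.
have -> : Gs K N q * (x t * (1 - F ^+ N)) = x t * (Gs K N q * (1 - F ^+ N)) by ring.
by rewrite ler_pM2l.
Qed.


Lemma sum_recr K (f : nat -> R) : (0 < K)%N ->
  \sum_(i < K) f i = \sum_(i < K.-1) f i + f K.-1.
Proof. by case: K => // K _; rewrite big_ord_recr. Qed.

Lemma Gs_le (r : R) K N p : 1 < r -> (1 <= N)%N -> (2 <= K)%N -> is_distr K p -> p K.-1 = r^-1 ->
  Gs K N p <= r.
Proof.
move=> r1 N1 K2 hd hK.
have [hp hs] := hd.
have hp0 : forall i, (i < K)%N -> 0 <= p i by move=> i hi; apply: ltW; apply: hp.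
have r0 : 0 < r by lra.
have ri : 0 < r^-1 by rewrite invr_gt0.
have hpre : pre p K.-1 = 1 - r^-1.
  have : pre p K = 1 := hs.
  by rewrite -(prednK (ltnW K2)) preS -/(pre p K.-1) hK => h; lra.
have hlt : pre p K.-1 < 1 by rewrite hpre; lra.
have [h0 h1] := Sle (N := N) hd N1 (leq_pred K) hlt.
rewrite hpre (_ : 1 - (1 - r^-1) = r^-1) in h1; last by ring.
have ri1 : r^-1 < 1 by rewrite invf_lt1.
have h2 : (1 - r^-1) ^+ N <= 1 by apply: exprn_ile1; lra.
have h3 := le_trans h1 h2.
rewrite ler_pdivrMr // mul1r in h3.
exact: h3.
Qed.

Lemma lower_elem (r : R) K N p : 1 < r -> (1 <= N)%N -> (2 <= K)%N -> is_distr K p -> p K.-1 = r^-1 ->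
  exists x, is_values r K x /\ ELR K N x p = Gs K N p / (Gs K N p + r * (1 - (1 - r^-1) ^+ N)).
Proof.
move=> r1 N1 K2 hd hK.
have [hp hs] := hd.
have hp0 : forall i, (i < K)%N -> 0 <= p i by move=> i hi; apply: ltW; apply: hp.
have K0 : (0 < K)%N by apply: ltnW.
have r0 : 0 < r by lra.
have ri : 0 < r^-1 by rewrite invr_gt0.
have hpre : pre p K.-1 = 1 - r^-1.
  have : pre p K = 1 := hs.
  by rewrite -(prednK K0) preS -/(pre p K.-1) hK => h; lra.
have hT := tailpE hs.
have hT0 : tailp K p 0 = 1 by rewrite hT // pre0 subr0.
have hTK : tailp K p K.-1 = r^-1 by rewrite hT ?leq_pred // hpre; ring.
pose x i := (tailp K p i)^-1.
have hxT : forall i, (i < K)%N -> x i * tailp K p i = 1.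
  by move=> i hi; rewrite /x mulVf // gt_eqF // tail_pos.
exists x; split.
  split; first by rewrite /x hT0 invr1.
  split.
    move=> i hi; rewrite /x ltf_pV2 ?posrE ?tail_pos //; last by apply: ltnW.
    rewrite (hT _ (ltnW hi)) (hT _ (ltnW (ltnW hi))) preS.
    by have := hp i (ltnW hi); lra.
  by rewrite /x hTK hT0 invrK invr1 mulr1.
have ht : reserve_idx K x p = K.-1.
  case: (reserve_spec x p K0) => h1 _ h3.
  have K1 : (K.-1 < K)%N by rewrite prednK.
  have hall : forall j, (j < K)%N -> x j * tailp K p j <= x K.-1 * tailp K p K.-1.
    by move=> j hj; rewrite !hxT.
  have h4 := h3 K.-1 K1 hall.
  by apply/anti_leq/andP; split => //; rewrite -ltnS prednK.
rewrite /ELR ht (sum_recr (fun i => zprob N p i * x i) K0) /Gs.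
congr (_ / (_ + _)).
rewrite /x hTK invrK zprobE prednK //.
have hpK : pre p K = 1 := hs.
by rewrite hpK hpre expr1n mulrC.
Qed.

End S.

Unset Implicit Arguments.

Theorem proposition6 (R : realType) (r : R) (N K : nat) :
  1 < r -> (1 <= N)%N -> (2 <= K)%N ->
  eta r K N =
  gamma_star r K N /
    ((r ^+ N - (r - 1) ^+ N) / r ^+ N.-1 + gamma_star r K N).
Proof.
move=> r1 N1 K2.
have r0 : 0 < r by lra.
have ri : 0 < r^-1 < 1 by rewrite invr_gt0 invf_lt1 ?r1 ?andbT; lra.
set C := r * (1 - (1 - r^-1) ^+ N).
have hCE : (r ^+ N - (r - 1) ^+ N) / r ^+ N.-1 = C.
  rewrite /C (_ : 1 - r^-1 = (r - 1) / r); last by field; rewrite gt_eqF.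
  rewrite expr_div_n -(prednK N1) exprS.
  field; rewrite ?expf_neq0 ?gt_eqF //.
have hC : 0 < C.
  case/andP: ri => ri0 ri1.
  by apply: mulr_gt0 => //; rewrite subr_gt0 expr_lt1 //; lra.
rewrite hCE /eta /gamma_star.
set ES := (X in sup X = _).
set GS := (X in _ = sup X / _).
have [p0 [hd0 hK0]] := q0_ex r1 K2.
have hGS0 : GS (Gs K N p0) by exists p0.
have hGS : has_sup GS.
  split; first by exists (Gs K N p0).
  exists r => g [p [hd [hK ->]]]; exact: (Gs_le r1 N1 K2 hd hK).
set g0 := sup GS.
have hg0 : 0 <= g0 by apply: le_trans (Gs_ge0 N hd0) (sup_upper_bound hGS hGS0).
have hCg : 0 < C + g0 by lra.
have hES0 : (ES !=set0)%classic.
  have [x [hv he]] := lower_elem r1 N1 K2 hd0 hK0.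
  by exists (ELR K N x p0); exists x, p0.
have hub : ubound ES (g0 / (C + g0)).
  move=> e [x [p [hd [hv ->]]]].
  have [q [hq1 hq2 hq3]] := upper r1 N1 K2 hd hv.
  set t := reserve_idx K x p in hq3.
  set A := \sum_(i < t) zprob N p i * x i in hq3.
  set B := \sum_(t <= i < K) zprob N p i * x i in hq3.
  have htK : (t <= K)%N.
    by case: (reserve_spec x p (ltnW K2)) => h _ _; apply: ltnW.
  have [hp hs] := hd.
  have hp0 : forall i, (i < K)%N -> 0 <= p i by move=> i hi; apply: ltW; apply: hp.
  have hA0 : 0 <= A.
    apply: sumr_ge0 => [[i hi]] _ /=; apply: mulr_ge0.
      by apply: (zprob_ge0 N hp0); apply: leq_trans hi htK.
    by apply: ltW; apply: (values_pos hv); apply: leq_trans hi htK.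
  have hB0 : 0 <= B.
    rewrite /B big_nat_cond; apply: sumr_ge0 => i /andP[/andP[_ hi] _].
    by apply: mulr_ge0; [apply: (zprob_ge0 N hp0) | apply: ltW; apply: (values_pos hv)].
  have hE : ELR K N x p = A / (A + B).
    rewrite /ELR -/t; congr (_ / _).
    by rewrite -(big_mkord xpredT (fun i => zprob N p i * x i)) (big_cat_nat (leq0n t) htK) big_mkord.
  set g := Gs K N q in hq3.
  have hg : g <= g0 by apply: (sup_upper_bound hGS); exists q.
  have hgp : 0 <= g by apply: Gs_ge0 hq1.
  have hCg' : 0 < C + g by lra.
  rewrite hE.
  have [hAB|hAB] := eqVneq (A + B) 0.
    by rewrite hAB invr0 mulr0; apply: divr_ge0 => //; lra.
  have hAB' : 0 < A + B by rewrite lt0r hAB /=; lra.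
  apply: (@le_trans _ _ (g / (C + g))).
    rewrite ler_pdivrMr // mulrAC ler_pdivlMr //; rewrite -/C in hq3; nra.
  rewrite ler_pdivrMr // mulrAC ler_pdivlMr //; nra.
have hEs : has_sup ES by split => //; exists (g0 / (C + g0)).
have hle : sup ES <= g0 / (C + g0) by apply: ge_sup.
set E := sup ES in hle *.
have hE1 : E < 1.
  apply: le_lt_trans hle _; rewrite ltr_pdivrMr // mul1r; lra.
have hgE : ubound GS (E * C / (1 - E)).
  move=> g [p [hd [hK ->]]].
  have [x [hv he]] := lower_elem r1 N1 K2 hd hK.
  have hin : ES (ELR K N x p) by exists x, p.
  have hgp := Gs_ge0 N hd.
  have hpos : 0 < Gs K N p + C by lra.
  have := sup_upper_bound hEs hin; rewrite -/E he -/C ler_pdivrMr // => h.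
  rewrite -/(Gs K N p) ler_pdivlMr; last by lra.
  lra.
have hg0E : g0 <= E * C / (1 - E) by apply: ge_sup => //; exists (Gs K N p0).
apply/eqP; rewrite eq_le hle /=.
rewrite ler_pdivrMr // .
rewrite ler_pdivlMr ?subr_gt0 // in hg0E.
lra.
Qed.
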